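(* Let $N=\{1,\dots,n\}$, $n\ge2$, be a parallel-link network with unit demand and affine latencies $\ell_i(x_i)=a_ix_i+b_i$, $a_i>0$, $b_i\ge 0$, with $x_i(0)>0$ for all $i\in N$. Then for every $c\in\mathbb{R}_+$ there is at most one pair $(t,x)$ satisfying: there is $K$ with $a_ix_i+b_i+t_i=K$ for all $i$, $\sum_ix_i=1$, $t_i=\min\{(a_i+1/\sum_{j\ne i}1/a_j)x_i,\,c\}$ for all $i$, and $x_i>0$ for all $i$. Consequently the $c$-capped subgame perfect Nash equilibrium is unique, i.e. $|\mathcal{T}(c)|=1$.
   Context: Parallel links $N$, one unit of flow; flows $x\in\mathbb{R}^N_+$ with $\sum_ix_i=1$. For tolls $t\in\mathbb{R}^N_+$, $x(t)$ is the unique Wardrop equilibrium for $t$ (for all $i,j$ with $x_i>0$: $\ell_i(x_i)+t_i\le\ell_j(x_j)+t_j$); $x(0)$ is the untolled one. Profit $\Pi_i(t)=t_ix_i(t)$. $\mathcal{T}(c)$: toll vectors $t$ with $0\le t_i\le c$ for all $i$ such that for every $i$ and $t'_i\in[0,c]$, $\Pi_i(t_i,t_{-i})\ge \Pi_i(t'_i,t_{-i})$ (flow recomputed). *)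

(* Defs.v *)
(* real numbers. Links are indexed 0..n-1; vectors are nat -> R
   (entries at indices >= n are irrelevant). *)
From Stdlib Require Import Reals Lra Lia Arith.
Open Scope R_scope.

Fixpoint rsum (n : nat) (f : nat -> R) : R :=
  match n with
  | O => 0
  | S m => rsum m f + f m
  end.

Definition lat (a b : nat -> R) (i : nat) (y : R) : R := a i * y + b i.

Definition wardrop (n : nat) (a b t x : nat -> R) : Prop :=
  (forall i, (i < n)%nat -> 0 <= x i) /\
  rsum n x = 1 /\
  (forall i j, (i < n)%nat -> (j < n)%nat -> 0 < x i ->
      lat a b i (x i) + t i <= lat a b j (x j) + t j).

Definition upd (t : nat -> R) (i : nat) (s : R) : nat -> R :=
  fun j => if Nat.eqb j i then s else t j.

(* t is in T(c): feasible caps and no profitable unilateral deviation in [0,c],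
   where flows are the (unique) Wardrop equilibria of the respective tolls. *)
Definition inT (n : nat) (a b : nat -> R) (c : R) (t : nat -> R) : Prop :=
  (forall i, (i < n)%nat -> 0 <= t i <= c) /\
  (forall i, (i < n)%nat -> forall s, 0 <= s <= c ->
     forall x x', wardrop n a b t x -> wardrop n a b (upd t i s) x' ->
       t i * x i >= s * x' i).

Definition sum_inv_others (n : nat) (a : nat -> R) (i : nat) : R :=
  rsum n (fun j => if Nat.eqb j i then 0 else / a j).

Definition capped_system (n : nat) (a b : nat -> R) (c : R) (t x : nat -> R) : Prop :=
  (exists K, forall i, (i < n)%nat -> a i * x i + b i + t i = K) /\
  rsum n x = 1 /\
  (forall i, (i < n)%nat ->
     t i = Rmin ((a i + / sum_inv_others n a i) * x i) c) /\
  (forall i, (i < n)%nat -> 0 < x i).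

(* Main.v *)
Require Import Defs.
From Stdlib Require Import Reals Lra Lia Arith Psatz Classical FunctionalExtensionality.
Open Scope R_scope.

Lemma rsum_ext n f g : (forall j, (j < n)%nat -> f j = g j) -> rsum n f = rsum n g.
Proof. induction n; simpl; intros H; [reflexivity|]. rewrite IHn by (intros; apply H; lia). rewrite H by lia. reflexivity. Qed.

Lemma rsum_plus n f g : rsum n (fun j => f j + g j) = rsum n f + rsum n g.
Proof. induction n; simpl; [lra|]. rewrite IHn; lra. Qed.

Lemma rsum_scal n c f : rsum n (fun j => c * f j) = c * rsum n f.
Proof. induction n; simpl; [lra|]. rewrite IHn; lra. Qed.

Lemma rsum_const0 n : rsum n (fun _ => 0) = 0.
Proof. induction n; simpl; [lra|]. rewrite IHn; lra. Qed.

Lemma rsum_le n f g : (forall j, (j<n)%nat -> f j <= g j) -> rsum n f <= rsum n g.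
Proof. induction n; simpl; intros H; [lra|]. 
  pose proof (IHn (fun j Hj => H j ltac:(lia))). specialize (H n ltac:(lia)). lra. Qed.

Lemma rsum_lt n f g i : (forall j, (j<n)%nat -> f j <= g j) -> (i<n)%nat -> f i < g i -> rsum n f < rsum n g.
Proof. induction n; simpl; intros H Hi Hlt; [lia|].
 destruct (Nat.eq_dec i n) as [->|].
 - pose proof (rsum_le n f g (fun j Hj => H j ltac:(lia))). lra.
 - pose proof (IHn (fun j Hj => H j ltac:(lia)) ltac:(lia) Hlt). specialize (H n ltac:(lia)). lra.
Qed.

Lemma rsum_split n f i : (i < n)%nat ->
  rsum n f = f i + rsum n (fun j => if Nat.eqb j i then 0 else f j).
Proof. induction n; intros Hi; [lia|]. simpl.
  destruct (Nat.eq_dec i n) as [->|Hne].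
  - rewrite Nat.eqb_refl. rewrite (rsum_ext n (fun j => if Nat.eqb j n then 0 else f j) f). lra.
    intros j Hj. destruct (Nat.eqb_spec j n); [lia|reflexivity].
  - rewrite (IHn ltac:(lia)). destruct (Nat.eqb_spec n i); [lia|]. lra.
Qed.

Lemma rsum_ge_term n f i : (forall j, (j<n)%nat -> 0 <= f j) -> (i<n)%nat -> f i <= rsum n f.
Proof. intros H Hi. rewrite (rsum_split n f i Hi).
  assert (rsum n (fun _ => 0) <= rsum n (fun j => if Nat.eqb j i then 0 else f j)).
  { apply rsum_le. intros j Hj. destruct (Nat.eqb j i); [lra| apply H; auto]. }
  rewrite rsum_const0 in H0. lra. Qed.

Lemma le_sum_eq n f g : (forall j, (j<n)%nat -> f j <= g j) -> rsum n f = rsum n g ->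
  forall j, (j<n)%nat -> f j = g j.
Proof. intros H Hs j Hj. destruct (Rle_lt_or_eq_dec _ _ (H j Hj)) as [Hl|]; auto.
  pose proof (rsum_lt n f g j H Hj Hl). lra. Qed.

Lemma pos_exists n x : (forall i, (i<n)%nat -> 0 <= x i) -> rsum n x = 1 ->
  exists i, (i<n)%nat /\ 0 < x i.
Proof. intros H Hs. destruct (classic (exists i, (i<n)%nat /\ 0 < x i)) as [|Hn]; auto.
 exfalso. assert (rsum n x <= rsum n (fun _ => 0)).
 { apply rsum_le. intros j Hj. destruct (Rle_lt_dec (x j) 0); auto. exfalso; apply Hn; eauto. }
 rewrite rsum_const0 in H0. lra.
Qed.

Lemma finite_min n f : exists L, forall j, (j<n)%nat -> L <= f j.
Proof. induction n. - exists 0. intros; lia.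
  - destruct IHn as [L HL]. exists (Rmin L (f n)). intros j Hj.
    destruct (Nat.eq_dec j n) as [->|]. apply Rmin_r.
    eapply Rle_trans. apply Rmin_l. apply HL; lia. Qed.

Lemma cont_ext f g : continuity f -> (forall x, f x = g x) -> continuity g.
Proof. intros H E. replace g with f; auto. apply functional_extensionality; auto. Qed.

Lemma Rmax_abs u v : Rmax u v = (u + v + Rabs (u - v)) / 2.
Proof. unfold Rmax, Rabs; destruct Rle_dec; destruct Rcase_abs; lra. Qed.

Lemma cont_max f g : continuity f -> continuity g -> continuity (fun K => Rmax (f K) (g K)).
Proof. intros Hf Hg.
  assert (H: continuity (mult_real_fct (/2) (plus_fct (plus_fct f g) (comp Rabs (minus_fct f g))))).
  { apply continuity_scal. apply continuity_plus. apply continuity_plus; auto.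
    apply continuity_comp. apply continuity_minus; auto. apply Rcontinuity_abs. }
  eapply cont_ext. apply H. intros K. unfold mult_real_fct, plus_fct, comp, minus_fct.
  rewrite Rmax_abs. lra. Qed.

Lemma cont_rsum n (F : nat -> R -> R) : (forall j, continuity (F j)) ->
  continuity (fun K => rsum n (fun j => F j K)).
Proof. intros H. induction n; simpl.
  - apply continuity_const. intros x y; reflexivity.
  - apply (continuity_plus (fun K => rsum n (fun j => F j K)) (F n)); auto. Qed.

Definition lvl (a b t x : nat -> R) K j :=
  (0 < x j /\ a j * x j + b j + t j = K) \/ (x j = 0 /\ K <= b j + t j).

Lemma wardrop_level n a b t x : wardrop n a b t x ->
  exists K, forall j, (j<n)%nat -> lvl a b t x K j.
Proof. intros [H0 [Hs Hw]]. destruct (pos_exists n x H0 Hs) as [i [Hi Hxi]].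
  exists (a i * x i + b i + t i). intros j Hj. unfold lvl.
  destruct (Rlt_dec 0 (x j)) as [Hp|Hp].
  - left. split; auto. pose proof (Hw i j Hi Hj Hxi). pose proof (Hw j i Hj Hi Hp).
    unfold lat in *; lra.
  - right. assert (x j = 0) by (pose proof (H0 j Hj); lra). split; auto.
    pose proof (Hw i j Hi Hj Hxi). unfold lat in *. rewrite H, Rmult_0_r in H1. lra.
Qed.

Lemma lvl_mono a b t x y K K' j : 0 < a j -> lvl a b t x K j -> lvl a b t y K' j -> K <= K' ->
  x j <= y j.
Proof. unfold lvl; intros Ha [[Hx Ex]|[Hx Ex]] [[Hy Ey]|[Hy Ey]] HK; try lra.
  - assert (a j * x j <= a j * y j) by lra. nra.
  - assert (a j * x j <= 0) by lra. nra.
Qed.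

Lemma wardrop_unique n a b t x y : (forall j, (j<n)%nat -> 0 < a j) ->
  wardrop n a b t x -> wardrop n a b t y -> forall j, (j<n)%nat -> x j = y j.
Proof. intros Ha Wx Wy. destruct (wardrop_level _ _ _ _ _ Wx) as [K HK].
  destruct (wardrop_level _ _ _ _ _ Wy) as [K' HK'].
  assert (Sx: rsum n x = 1) by apply Wx. assert (Sy: rsum n y = 1) by apply Wy.
  destruct (Rle_or_lt K K') as [H|H].
  - apply le_sum_eq; [|lra]. intros j Hj. eapply lvl_mono; eauto.
  - intros j Hj. symmetry. revert j Hj. apply le_sum_eq; [|lra]. intros j Hj. eapply lvl_mono; eauto; lra.
Qed.

Lemma wardrop_exists n a b t : (0<n)%nat -> (forall j, (j<n)%nat -> 0 < a j) ->
  exists x, wardrop n a b t x.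
Proof. intros Hn Ha.
  set (G := fun K => rsum n (fun j => Rmax 0 ((K - b j - t j)/a j))).
  assert (Gc : continuity (fun K => G K - 1)).
  { apply (continuity_minus G (fun _ => 1)); [| apply continuity_const; intros u v; reflexivity]. unfold G.
    apply (cont_rsum n (fun j K => Rmax 0 ((K - b j - t j)/a j))). intros j.
    apply (cont_max (fun _ => 0) (fun K => (K - b j - t j)/a j)); [apply continuity_const; intros u v; reflexivity | reg]. }
  destruct (finite_min n (fun j => b j + t j)) as [L HL].
  assert (GL: G L = 0).
  { unfold G. transitivity (rsum n (fun _ => 0)); [|apply rsum_const0]. apply rsum_ext. intros j Hj.
    apply Rmax_left. specialize (HL j Hj). simpl in HL. unfold Rdiv.
    assert (0 <= / a j) by (left; apply Rinv_0_lt_compat; auto). nra. }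
  set (Kh := b 0%nat + t 0%nat + a 0%nat).
  assert (GH: 1 <= G Kh).
  { unfold G. eapply Rle_trans; [|apply (rsum_ge_term _ _ 0%nat); auto].
    - eapply Rle_trans; [|apply Rmax_r]. unfold Kh. right. field. specialize (Ha 0%nat Hn); lra.
    - intros j _. apply Rmax_l. }
  assert (LH: L <= Kh). { specialize (HL 0%nat Hn). specialize (Ha 0%nat Hn). simpl in HL. unfold Kh. lra. }
  destruct (IVT_cor _ L Kh Gc LH) as [z [_ Hz]].
  { rewrite GL. nra. }
  exists (fun j => Rmax 0 ((z - b j - t j)/a j)). split; [|split].
  - intros; apply Rmax_l.
  - fold (G z). lra.
  - intros i j Hi Hj Hp. unfold lat.
    assert (E: Rmax 0 ((z - b i - t i) / a i) = (z - b i - t i) / a i).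
    { unfold Rmax in *. destruct Rle_dec; lra. }
    rewrite E.
    assert (Hj2: (z - b j - t j) / a j <= Rmax 0 ((z - b j - t j) / a j)) by apply Rmax_r.
    specialize (Ha i Hi) as Hai. specialize (Ha j Hj) as Haj.
    assert (a i * ((z - b i - t i) / a i) = z - b i - t i) by (field; lra).
    assert (a j * ((z - b j - t j) / a j) = z - b j - t j) by (field; lra).
    assert (a j * ((z - b j - t j) / a j) <= a j * Rmax 0 ((z - b j - t j) / a j))
      by (apply Rmult_le_compat_l; lra).
    lra.
Qed.

Lemma S_pos n a i : (2 <= n)%nat -> (forall j, (j<n)%nat -> 0 < a j) -> (i<n)%nat ->
  0 < sum_inv_others n a i.
Proof. intros Hn Ha Hi. unfold sum_inv_others.
  set (j := if Nat.eqb i 0 then 1%nat else 0%nat).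
  assert (Hj: (j < n)%nat /\ j <> i) by (unfold j; destruct (Nat.eqb_spec i 0%nat); simpl; lia).
  rewrite <- (rsum_const0 n) at 1. apply (rsum_lt _ _ _ j).
  - intros k Hk. cbv beta. destruct (Nat.eqb k i); [lra|]. left; apply Rinv_0_lt_compat; auto.
  - apply Hj.
  - cbv beta. destruct (Nat.eqb_spec j i); [lia|]. apply Rinv_0_lt_compat; apply Ha; apply Hj.
Qed.

Lemma h_strict a al c x x' : 0 < a -> 0 < al -> x' < x ->
  a * x' + Rmin (al * x') c < a * x + Rmin (al * x) c.
Proof. intros. unfold Rmin; repeat destruct Rle_dec; nra. Qed.

Lemma capped_level n a b c t x : capped_system n a b c t x ->
  exists K, forall i, (i<n)%nat -> a i * x i + b i + Rmin ((a i + / sum_inv_others n a i) * x i) c = K.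
Proof. intros [[K HK] [_ [Ht _]]]. exists K. intros i Hi. rewrite <- Ht by auto. auto. Qed.

Lemma part1 n a b c (Hn : (2 <= n)%nat) (Ha : forall i, (i < n)%nat -> 0 < a i) :
  forall t x t' x',
     capped_system n a b c t x -> capped_system n a b c t' x' ->
     forall i, (i < n)%nat -> t i = t' i /\ x i = x' i.
Proof. intros t x t' x' C C'.
  assert (Hx : forall i, (i<n)%nat -> x i = x' i).
  { destruct (capped_level _ _ _ _ _ _ C) as [K HK].
    destruct (capped_level _ _ _ _ _ _ C') as [K' HK'].
    assert (Sx: rsum n x = 1) by apply C. assert (Sy: rsum n x' = 1) by apply C'.
    assert (Mono: forall K1 K2 (y z : nat -> R),
      (forall i, (i<n)%nat -> a i * y i + b i + Rmin ((a i + / sum_inv_others n a i) * y i) c = K1) ->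
      (forall i, (i<n)%nat -> a i * z i + b i + Rmin ((a i + / sum_inv_others n a i) * z i) c = K2) ->
      K1 <= K2 -> forall i, (i<n)%nat -> y i <= z i).
    { intros K1 K2 y z H1 H2 HK12 i Hi. destruct (Rle_lt_dec (y i) (z i)) as [|Hl]; auto.
      exfalso. specialize (H1 i Hi). specialize (H2 i Hi).
      pose proof (S_pos n a i Hn Ha Hi).
      pose proof (h_strict (a i) (a i + / sum_inv_others n a i) c (y i) (z i) (Ha i Hi)
          ltac:(pose proof (Ha i Hi); pose proof (Rinv_0_lt_compat _ H); lra) Hl). lra. }
    destruct (Rle_or_lt K K') as [H|H].
    - apply le_sum_eq; [|lra]. eapply Mono; eauto.
    - intros j Hj. symmetry. revert j Hj. apply le_sum_eq; [|lra]. eapply Mono; eauto; lra. }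
  intros i Hi. split; auto. destruct C as [_ [_ [Ht _]]]. destruct C' as [_ [_ [Ht' _]]].
  rewrite Ht, Ht', Hx by auto. reflexivity.
Qed.

Lemma fin_ineq al x x' s t c : 0 < al -> 0 < x -> 0 <= s <= c -> t = Rmin (al * x) c ->
  al * (x - x') >= s - t -> t * x >= s * x'.
Proof. intros Hal Hx Hs Ht H. unfold Rmin in Ht. destruct Rle_dec as [Hle|Hle]; subst t.
  - assert (s * (al * (x - x')) >= s * (s - al * x)) by nra.
    assert (al * (al * x * x - s * x') >= 0).
    { pose proof (Rle_0_sqr (al*x - s)) as Hq; unfold Rsqr in Hq. lra. }
    assert (al * x * x - s * x' >= 0).
    { destruct (Rge_dec (al * x * x - s * x') 0); auto. nra. } nra.
  - assert (s * (al * (x - x')) >= s * (s - c)) by nra.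
    assert (al * (c * x - s * x') >= 0).
    { assert (0 <= (c - s) * (al * x - s)) by (apply Rmult_le_pos; lra). nra. }
    destruct (Rge_dec (c * x - s * x') 0); [lra|nra].
Qed.

Lemma rsum_others_minus n i f g :
  rsum n (fun j => if Nat.eqb j i then 0 else f j - g j) =
  rsum n (fun j => if Nat.eqb j i then 0 else f j) - rsum n (fun j => if Nat.eqb j i then 0 else g j).
Proof. rewrite (rsum_ext n _ (fun j => (if Nat.eqb j i then 0 else f j) + (-1) * (if Nat.eqb j i then 0 else g j))).
  rewrite rsum_plus, rsum_scal. ring. intros j _. destruct (Nat.eqb j i); ring. Qed.

Lemma rsum_others_scal n i (k : R) (a : nat -> R) :
  rsum n (fun j => if Nat.eqb j i then 0 else k * / a j) = k * sum_inv_others n a i.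
Proof. unfold sum_inv_others. rewrite <- rsum_scal. apply rsum_ext. intros j _. destruct (Nat.eqb j i); ring. Qed.

Lemma rsum_others n i f : (i < n)%nat ->
  rsum n (fun j => if Nat.eqb j i then 0 else f j) = rsum n f - f i.
Proof. intros Hi. rewrite (rsum_split n f i Hi). ring. Qed.

Lemma dev_bound n a b c t x K i s x' :
 (2 <= n)%nat -> (forall j, (j<n)%nat -> 0 < a j) -> 0 <= c -> (i<n)%nat ->
 (forall j, (j<n)%nat -> 0 < x j) -> rsum n x = 1 ->
 (forall j, (j<n)%nat -> a j * x j + b j + t j = K) ->
 t i = Rmin ((a i + / sum_inv_others n a i) * x i) c ->
 0 <= s <= c -> wardrop n a b (upd t i s) x' -> t i * x i >= s * x' i.
Proof. intros Hn Ha Hc Hi Hx Hsx HK Ht Hs [W0 [Ws Ww]].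
  pose proof (S_pos n a i Hn Ha Hi) as HS.
  set (S := sum_inv_others n a i) in *. set (u := / S) in *.
  assert (Hu: 0 < u) by (apply Rinv_0_lt_compat; auto).
  assert (HuS: u * S = 1) by (unfold u; field; lra).
  pose proof (Ha i Hi) as Hai. pose proof (Hx i Hi) as Hxi.
  destruct (Rle_lt_or_eq_dec 0 (x' i) (W0 i Hi)) as [Hp|H0].
  2:{ rewrite <- H0, Rmult_0_r. assert (0 <= t i).
      { rewrite Ht. apply Rmin_glb; auto. apply Rmult_le_pos; lra. } nra. }
  set (K' := a i * x' i + b i + s).
  assert (Hj: forall j, (j<n)%nat -> j <> i -> K' - K <= a j * (x' j - x j)).
  { intros j Hj Hne. pose proof (Ww i j Hi Hj Hp) as H. unfold lat, upd in H.
    rewrite Nat.eqb_refl in H. destruct (Nat.eqb_spec j i); [contradiction|].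
    specialize (HK j Hj). unfold K'. lra. }
  assert (Hsum: rsum n (fun j => if Nat.eqb j i then 0 else (K'-K) * / a j) <=
                rsum n (fun j => if Nat.eqb j i then 0 else x' j - x j)).
  { apply rsum_le. intros j Hj'. destruct (Nat.eqb_spec j i); [lra|].
    specialize (Hj j Hj' n0). pose proof (Ha j Hj').
    apply (Rmult_le_reg_l (a j)); auto. replace (a j * ((K' - K) * / a j)) with (K' - K) by (field; lra).
    lra. }
  rewrite rsum_others_scal, rsum_others_minus, !rsum_others in Hsum by auto.
  fold S in Hsum. rewrite Ws, Hsx in Hsum.
  assert (K' - K <= u * (x i - x' i)).
  { assert (u * ((K' - K) * S) <= u * (1 - x' i - (1 - x i))) by (apply Rmult_le_compat_l; lra).
    replace (u * ((K' - K) * S)) with ((K'-K) * (u * S)) in H by ring. rewrite HuS in H. lra. }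
  specialize (HK i Hi). unfold K' in H.
  apply (fin_ineq (a i + u) (x i) (x' i) s (t i) c); auto; try lra; nra.
Qed.

Lemma finite_min_pos n f : (forall j, (j<n)%nat -> 0 < f j) -> exists m, 0 < m /\ forall j, (j<n)%nat -> m <= f j.
Proof. induction n; intros H. - exists 1. split; [lra|]. intros; lia.
  - destruct IHn as [m [Hm HL]]; [intros; apply H; lia|]. exists (Rmin m (f n)). split.
    apply Rmin_glb_lt; [auto| apply H; lia].
    intros j Hj. destruct (Nat.eq_dec j n) as [->|]. apply Rmin_r.
    eapply Rle_trans. apply Rmin_l. apply HL; lia. Qed.

Lemma dev_flow n a b t x K i s m :
 (2 <= n)%nat -> (forall j, (j<n)%nat -> 0 < a j) -> (i<n)%nat ->
 (forall j, (j<n)%nat -> 0 < x j) -> rsum n x = 1 ->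
 (forall j, (j<n)%nat -> a j * x j + b j + t j = K) ->
 0 < m -> (forall j, (j<n)%nat -> m <= a j * x j) -> - m < s - t i < m ->
 wardrop n a b (upd t i s)
   (fun j => if Nat.eqb j i then x i - (s - t i)/(a i + / sum_inv_others n a i)
             else x j + ((s - t i) - a i * ((s - t i)/(a i + / sum_inv_others n a i))) / a j).
Proof. intros Hn Ha Hi Hx Hsx HK Hm Hmj Hst.
  pose proof (S_pos n a i Hn Ha Hi) as HS.
  set (S := sum_inv_others n a i) in *. set (u := / S) in *.
  assert (Hu: 0 < u) by (apply Rinv_0_lt_compat; auto).
  assert (HuS: u * S = 1) by (unfold u; field; lra).
  pose proof (Ha i Hi) as Hai. pose proof (Hx i Hi) as Hxi.
  set (al := a i + u) in *. assert (Hal : 0 < al) by (unfold al; lra).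
  set (d := (s - t i) / al). assert (Hd: al * d = s - t i) by (unfold d; field; lra).
  set (dl := (s - t i) - a i * d). assert (Hdl: dl = u * d) by (unfold dl; rewrite <- Hd; unfold al; ring).
  assert (Hpi: 0 < x i - d).
  { assert (al * (x i - d) > 0). { specialize (Hmj i Hi). unfold al in *. nra. } nra. }
  assert (Hpj: forall j, (j<n)%nat -> 0 < a j * x j + dl).
  { intros j Hj. specialize (Hmj j Hj). destruct (Rle_or_lt 0 d).
    - nra.
    - assert (al * dl = u * (s - t i)) by (rewrite Hdl, <- Hd; ring).
      assert (Hneg: s - t i < 0) by (rewrite <- Hd; nra).
      assert (al * (dl - (s - t i)) = - a i * (s - t i)) by (rewrite Rmult_minus_distr_l, H0; unfold al; ring).
      assert (al * (dl - (s - t i)) > 0) by (rewrite H1; nra).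
      assert (dl - (s - t i) > 0).
      { destruct (Rgt_dec (dl - (s - t i)) 0); auto. nra. } lra. }
  assert (Eq: forall j, (j<n)%nat -> a j * (if Nat.eqb j i then x i - d else x j + dl / a j) + b j + upd t i s j = K + dl).
  { intros j Hj. unfold upd. destruct (Nat.eqb_spec j i).
    - subst j. specialize (HK i Hi). unfold dl. lra.
    - specialize (HK j Hj). pose proof (Ha j Hj). rewrite <- HK. field. lra. }
  split; [|split].
  - intros j Hj. destruct (Nat.eqb_spec j i); [lra|].
    pose proof (Hpj j Hj). pose proof (Ha j Hj).
    assert (x j + dl / a j = (a j * x j + dl) / a j) by (field; lra). rewrite H1.
    left. apply Rdiv_lt_0_compat; auto.
  - rewrite (rsum_split _ _ i Hi). rewrite Nat.eqb_refl.
    rewrite (rsum_ext n _ (fun j => (if Nat.eqb j i then 0 else x j) + (if Nat.eqb j i then 0 else dl * / a j))).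
    rewrite rsum_plus, rsum_others, rsum_others_scal by auto. fold S.
    rewrite Hdl, Hsx. replace (u * d * S) with (d * (u * S)) by ring. rewrite HuS. ring.
    intros j _. destruct (Nat.eqb j i); [ring|]. unfold Rdiv; ring.
  - intros i' j Hi' Hj _. unfold lat. pose proof (Eq i' Hi'). pose proof (Eq j Hj). lra.
Qed.

Lemma foc n a b c t x K i :
 (2 <= n)%nat -> (forall j, (j<n)%nat -> 0 < a j) -> (i<n)%nat ->
 (forall j, (j<n)%nat -> 0 < x j) -> rsum n x = 1 ->
 (forall j, (j<n)%nat -> a j * x j + b j + t j = K) ->
 0 <= t i <= c ->
 (forall s, 0 <= s <= c -> forall y, wardrop n a b (upd t i s) y -> t i * x i >= s * y i) ->
 t i = Rmin ((a i + / sum_inv_others n a i) * x i) c.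
Proof. intros Hn Ha Hi Hx Hsx HK Htc Hdev.
  destruct (finite_min_pos n (fun j => a j * x j)) as [m [Hm Hmj]].
  { intros j Hj. apply Rmult_lt_0_compat; auto. }
  pose proof (S_pos n a i Hn Ha Hi) as HS.
  assert (Hu: 0 < / sum_inv_others n a i) by (apply Rinv_0_lt_compat; auto).
  pose proof (Ha i Hi) as Hai. pose proof (Hx i Hi) as Hxi.
  set (al := a i + / sum_inv_others n a i) in *. assert (Hal : 0 < al) by (unfold al; lra).
  assert (Key: forall s, 0 <= s <= c -> - m < s - t i < m -> (s - t i) * (al * x i - s) <= 0).
  { intros s Hs Hst. pose proof (dev_flow n a b t x K i s m Hn Ha Hi Hx Hsx HK Hm Hmj Hst) as W.
    specialize (Hdev s Hs _ W). cbv beta in Hdev. rewrite Nat.eqb_refl in Hdev. fold al in Hdev.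
    set (d := (s - t i) / al) in *. assert (Hd: al * d = s - t i) by (unfold d; field; lra).
    assert (E: (s - t i) * (al * x i - s) = - al * (t i * x i - s * (x i - d))).
    { replace (t i) with (s - al * d) by lra. ring. }
    rewrite E. nra. }
  assert (C1: t i <= al * x i).
  { destruct (Rle_or_lt (t i) (al * x i)) as [|Hlt]; auto. exfalso.
    set (e := Rmin (m/2) ((t i - al * x i)/2)).
    assert (He1: e <= m/2) by apply Rmin_l. assert (He2: e <= (t i - al * x i)/2) by apply Rmin_r.
    assert (He0: 0 < e) by (apply Rmin_glb_lt; lra).
    assert (0 < al * x i) by nra.
    specialize (Key (t i - e) ltac:(lra) ltac:(lra)).
    assert (0 < (e) * (t i - e - al * x i)) by (apply Rmult_lt_0_compat; lra). nra. }
  assert (C2: al * x i <= t i \/ t i = c).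
  { destruct (Rle_or_lt (al * x i) (t i)) as [|Hlt]; auto.
    destruct (Req_dec (t i) c) as [|Hne]; auto. exfalso.
    set (e := Rmin (m/2) (Rmin (c - t i) ((al * x i - t i)/2))).
    assert (He1: e <= m/2) by apply Rmin_l.
    assert (He2: e <= c - t i) by (eapply Rle_trans; [apply Rmin_r|apply Rmin_l]).
    assert (He3: e <= (al * x i - t i)/2) by (eapply Rle_trans; [apply Rmin_r|apply Rmin_r]).
    assert (He0: 0 < e) by (apply Rmin_glb_lt; [lra|apply Rmin_glb_lt; lra]).
    specialize (Key (t i + e) ltac:(lra) ltac:(lra)).
    assert (0 < (e) * (al * x i - (t i + e))) by (apply Rmult_lt_0_compat; lra). nra. }
  unfold Rmin. destruct Rle_dec; lra.
Qed.

Lemma level_wardrop n a b t x K : (forall j, (j<n)%nat -> 0 <= x j) -> rsum n x = 1 ->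
  (forall j, (j<n)%nat -> a j * x j + b j + t j = K) -> wardrop n a b t x.
Proof. intros H0 Hs HK. split; [auto|split; auto]. intros i j Hi Hj _. unfold lat.
  rewrite (HK i Hi), (HK j Hj). lra. Qed.

Lemma wardrop_ext_t n a b t t' x : (forall j, (j<n)%nat -> t j = t' j) ->
  wardrop n a b t x -> wardrop n a b t' x.
Proof. intros E [H0 [Hs Hw]]. split; [auto|split; auto]. intros i j Hi Hj Hp.
  rewrite <- (E i Hi), <- (E j Hj). auto. Qed.

Lemma all_pos_level n a b t x : wardrop n a b t x -> (forall j, (j<n)%nat -> 0 < x j) ->
  exists K, forall j, (j<n)%nat -> a j * x j + b j + t j = K.
Proof. intros W Hp. destruct (wardrop_level _ _ _ _ _ W) as [K HK]. exists K.
  intros j Hj. destruct (HK j Hj) as [[_ E]|[E _]]; auto. specialize (Hp j Hj). lra. Qed.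

Lemma pos_eq n a b c t x x0 K0 :
  (2 <= n)%nat -> (forall j, (j<n)%nat -> 0 < a j) -> 0 <= c ->
  (forall x0, wardrop n a b (fun _ => 0) x0 -> forall i, (i < n)%nat -> 0 < x0 i) ->
  (forall j, (j<n)%nat -> 0 < x0 j) -> rsum n x0 = 1 ->
  (forall j, (j<n)%nat -> a j * x0 j + b j = K0) ->
  inT n a b c t -> wardrop n a b t x -> forall i, (i<n)%nat -> 0 < x i.
Proof. intros Hn Ha Hc Hx0 Hp0 Hsum0 HK0 [Tb Tdev] W i Hi.
  destruct (Req_dec c 0) as [Hc0|Hc0].
  { apply (Hx0 x); auto. apply (wardrop_ext_t n a b t); auto. intros j Hj. specialize (Tb j Hj). lra. }
  destruct (Rlt_dec 0 (x i)) as [|Hni]; auto. exfalso.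
  assert (Hxi: x i = 0) by (destruct W as [W0 _]; specialize (W0 i Hi); lra).
  pose proof (Ha i Hi) as Hai. pose proof (Hp0 i Hi) as Hx0i. pose proof (HK0 i Hi) as HK0i.
  assert (HbK: 0 < K0 - b i) by nra.
  set (s := Rmin c ((K0 - b i)/2)).
  assert (Hs1: s <= (K0 - b i)/2) by apply Rmin_r. assert (Hs2: s <= c) by apply Rmin_l.
  assert (Hs0: 0 < s) by (apply Rmin_glb_lt; lra).
  destruct (wardrop_exists n a b (upd t i s) ltac:(lia) Ha) as [y Wy].
  specialize (Tdev i Hi s ltac:(lra) x y W Wy). rewrite Hxi, Rmult_0_r in Tdev.
  assert (Hyi: y i = 0) by (destruct Wy as [Y0 _]; specialize (Y0 i Hi); nra).
  destruct (wardrop_level _ _ _ _ _ Wy) as [K HK].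
  assert (HKi: K <= b i + s).
  { destruct (HK i Hi) as [[Hp _]|[_ E]]; [lra|]. unfold upd in E. rewrite Nat.eqb_refl in E. lra. }
  assert (K0 <= K).
  { destruct (Rle_or_lt K0 K) as [|HKl]; auto. exfalso.
    assert (Hlt: forall j, (j<n)%nat -> y j < x0 j).
    { intros j Hj. pose proof (Ha j Hj). pose proof (Hp0 j Hj). pose proof (HK0 j Hj).
      assert (0 <= upd t i s j) by (unfold upd; destruct (Nat.eqb j i); [lra| apply Tb; auto]).
      destruct (HK j Hj) as [[Hp E]|[E _]]; [|lra].
      assert (a j * y j < a j * x0 j) by lra. nra. }
    assert (rsum n y < rsum n x0).
    { apply (rsum_lt _ _ _ 0%nat); [intros j Hj; left; auto | lia | apply Hlt; lia]. }
    destruct Wy as [_ [Sy _]]. lra. }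
  lra.
Qed.

Lemma phi_level a al c y : 0 < a -> 0 < al -> 0 <= c ->
  a * Rmax (y/(a+al)) ((y-c)/a) + Rmin (al * Rmax (y/(a+al)) ((y-c)/a)) c = y.
Proof. intros Ha Hal Hc.
  assert (Ew: y = (a + al) * (y / (a + al))) by (field; lra).
  assert (Ez: y - c = a * ((y - c) / a)) by (field; lra).
  set (w := y / (a + al)) in *. set (z := (y - c) / a) in *.
  unfold Rmax, Rmin. destruct Rle_dec as [H1|H1]; destruct Rle_dec as [H2|H2].
  - assert ((a+al) * w <= (a+al) * z) by (apply Rmult_le_compat_l; lra). nra.
  - lra.
  - lra.
  - assert (a * z < a * w) by (apply Rmult_lt_compat_l; lra). nra.
Qed.

Theorem mainTheorem6 (n : nat) (a b : nat -> R) (c : R)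
  (Hn : (2 <= n)%nat)
  (Ha : forall i, (i < n)%nat -> 0 < a i)
  (Hb : forall i, (i < n)%nat -> 0 <= b i)
  (Hx0 : forall x0, wardrop n a b (fun _ => 0) x0 ->
           forall i, (i < n)%nat -> 0 < x0 i)
  (Hc : 0 <= c) :
  (forall t x t' x',
     capped_system n a b c t x -> capped_system n a b c t' x' ->
     forall i, (i < n)%nat -> t i = t' i /\ x i = x' i) /\
  (exists t, inT n a b c t /\
     forall t', inT n a b c t' -> forall i, (i < n)%nat -> t' i = t i).
Proof.
  split. { apply part1; auto. }
  destruct (wardrop_exists n a b (fun _ => 0) ltac:(lia) Ha) as [x0 W0].
  pose proof (Hx0 x0 W0) as Hp0.
  destruct (all_pos_level _ _ _ _ _ W0 Hp0) as [K0 HK0].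
  assert (Hs0: rsum n x0 = 1) by apply W0.
  assert (HK0': forall j, (j<n)%nat -> a j * x0 j + b j = K0) by (intros j Hj; rewrite <- (HK0 j Hj); ring).
  assert (Hbj: forall j, (j<n)%nat -> b j < K0).
  { intros j Hj. pose proof (Ha j Hj). pose proof (Hp0 j Hj). pose proof (HK0' j Hj). nra. }
  set (al := fun j => a j + / sum_inv_others n a j).
  assert (Hal: forall j, (j<n)%nat -> 0 < al j).
  { intros j Hj. unfold al. pose proof (S_pos n a j Hn Ha Hj). pose proof (Rinv_0_lt_compat _ H).
    pose proof (Ha j Hj). lra. }
  set (phi := fun j K => Rmax ((K - b j)/(a j + al j)) ((K - b j - c)/a j)).
  set (F := fun K => rsum n (fun j => phi j K)).
  assert (Fc: continuity (fun K => F K - 1)).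
  { apply (continuity_minus F (fun _ => 1)); [| apply continuity_const; intros u v; reflexivity].
    unfold F. apply (cont_rsum n phi). intros j. unfold phi.
    apply (cont_max (fun K => (K - b j)/(a j + al j)) (fun K => (K - b j - c)/a j)); reg. }
  assert (FL: F K0 <= 1).
  { rewrite <- Hs0. unfold F. apply rsum_le. intros j Hj. unfold phi.
    pose proof (Ha j Hj). pose proof (Hal j Hj). pose proof (Hbj j Hj).
    assert (x0 j = (K0 - b j) / a j) by (rewrite <- (HK0' j Hj); field; lra). rewrite H2.
    apply Rmax_lub; unfold Rdiv.
    - apply Rmult_le_compat_l; [lra|]. apply Rinv_le_contravar; lra.
    - apply Rmult_le_compat_r; [left; apply Rinv_0_lt_compat; lra| lra]. }
  set (Kh := K0 + a 0%nat + al 0%nat).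
  assert (H0n: (0 < n)%nat) by lia.
  assert (FH: 1 <= F Kh).
  { unfold F. eapply Rle_trans; [|apply (rsum_ge_term _ _ 0%nat); auto].
    - unfold phi. eapply Rle_trans; [|apply Rmax_l]. pose proof (Ha _ H0n). pose proof (Hal _ H0n).
      pose proof (Hbj _ H0n). apply (Rmult_le_reg_r (a 0%nat + al 0%nat)); [lra|].
      unfold Kh. field_simplify; lra.
    - intros j Hj. unfold phi. eapply Rle_trans; [|apply Rmax_l]. pose proof (Ha _ Hj). pose proof (Hal _ Hj).
      pose proof (Hbj _ Hj). pose proof (Ha _ H0n). pose proof (Hal _ H0n). unfold Kh; left; apply Rdiv_lt_0_compat; lra. }
  assert (LH: K0 <= Kh). { pose proof (Ha _ H0n). pose proof (Hal _ H0n). unfold Kh. lra. }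
  destruct (IVT_cor _ K0 Kh Fc LH) as [K [[HKlo _] HK]].
  { nra. }
  set (xs := fun j => phi j K).
  set (ts := fun j => Rmin (al j * xs j) c).
  assert (Hxs: forall j, (j<n)%nat -> 0 < xs j).
  { intros j Hj. unfold xs, phi. eapply Rlt_le_trans; [|apply Rmax_l]. pose proof (Ha _ Hj).
    pose proof (Hal _ Hj). pose proof (Hbj _ Hj). apply Rdiv_lt_0_compat; lra. }
  assert (Sxs: rsum n xs = 1) by (unfold xs; fold (F K); lra).
  assert (Lxs: forall j, (j<n)%nat -> a j * xs j + b j + ts j = K).
  { intros j Hj. unfold ts, xs, phi.
    pose proof (phi_level (a j) (al j) c (K - b j) (Ha _ Hj) (Hal _ Hj) Hc). lra. }
  assert (Cs: capped_system n a b c ts xs).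
  { split; [exists K; auto|split; [auto|split; [|auto]]]. intros i Hi. reflexivity. }
  assert (Ws: wardrop n a b ts xs).
  { apply (level_wardrop n a b ts xs K); auto. intros j Hj; left; auto. }
  assert (Its: inT n a b c ts).
  { split.
    - intros i Hi. unfold ts. split.
      + apply Rmin_glb; auto. pose proof (Hal _ Hi). pose proof (Hxs _ Hi). nra.
      + apply Rmin_r.
    - intros i Hi s Hs x1 x' W1 W'.
      rewrite <- (wardrop_unique n a b ts xs x1 Ha Ws W1 i Hi).
      apply (dev_bound n a b c ts xs K i s x'); auto. }
  exists ts. split; auto.
  intros t' It' i Hi.
  destruct (wardrop_exists n a b t' H0n Ha) as [x' W'].
  assert (Hp': forall j, (j<n)%nat -> 0 < x' j) by (apply (pos_eq n a b c t' x' x0 K0); auto).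
  destruct (all_pos_level _ _ _ _ _ W' Hp') as [K' HK'].
  assert (C': capped_system n a b c t' x').
  { split; [exists K'; auto|split; [apply W'|split; [|auto]]].
    intros j Hj. destruct It' as [Tb Tdev].
    apply (foc n a b c t' x' K' j Hn Ha Hj Hp' ltac:(apply W') HK' ltac:(apply Tb; auto)).
    intros s Hs y Wy. apply (Tdev j Hj s Hs x' y W' Wy). }
  apply (part1 n a b c Hn Ha t' x' ts xs C' Cs i Hi).
Qed.
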